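(* For a tournament $\mathrel{W}$ on $\mathcal{X}$, the following are equivalent: (1) $\mathrel{W}$ is not a ranking (i.e. is not transitive); (2) for some ranking $\succ$ on $\mathcal{X}$ (the chair's preference), the chair benefits from agenda-setting under $\mathrel{W}$; (3) for every ranking $\succ$ on $\mathcal{X}$, the chair benefits from agenda-setting under $\mathrel{W}$.
   Context: Let $\mathcal{X}$ be a finite set of alternatives. A proto-ranking is an irreflexive transitive relation; a ranking is a total proto-ranking; a tournament is a total asymmetric relation on $\mathcal{X}$. Interaction: given a tournament $\mathrel{W}$, start from $R_0=\varnothing$; in each period with $R_{t-1}$ not total the chair offers a pair $\{x,y\}$ unranked by $R_{t-1}$, the winner is $x$ if $x\mathrel{W}y$ and $y$ otherwise, and $R_t$ is the transitive closure of $R_{t-1}\cup\{(\text{winner},\text{loser})\}$; stop when $R_t$ is total. A strategy assigns to each non-terminal history a pair unranked at it; its outcome under $\mathrel{W}$ is the final ranking. A ranking is $\mathrel{W}$-feasible if it is the outcome under $\mathrel{W}$ of some strategy. Given the chair's preference $\succ$ (a ranking), $R$ is more aligned with $\succ$ than $R'$ if for all $x\succ y$, $xR'y$ implies $xRy$; a ranking is $\mathrel{W}$-unimprovable if no other $\mathrel{W}$-feasible ranking is more aligned with $\succ$. Given $\succ$, the chair benefits from agenda-setting under $\mathrel{W}$ if there exists a $\mathrel{W}$-feasible ranking that is not $\mathrel{W}$-unimprovable. *)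

(* Defs.v *)
From mathcomp Require Import all_boot.
Set Implicit Arguments. Unset Strict Implicit. Unset Printing Implicit Defensive.

Section Agenda.
Variable T : finType.

Definition tclos (R : rel T) : rel T :=
  fun x y => [exists z, R x z && connect R z y].

Definition irreflexiveR (R : rel T) : Prop := forall x, ~~ R x x.
Definition transitiveR (R : rel T) : Prop :=
  forall x y z, R x y -> R y z -> R x z.
Definition asymmetricR (R : rel T) : Prop := forall x y, R x y -> ~~ R y x.
Definition totalb (R : rel T) : bool :=
  [forall x, forall y, (x != y) ==> (R x y || R y x)].

Definition proto_ranking (R : rel T) : Prop := irreflexiveR R /\ transitiveR R.
Definition ranking (R : rel T) : Prop := proto_ranking R /\ totalb R.
Definition tournament (W : rel T) : Prop := totalb W /\ asymmetricR W.

Definition unranked (R : rel T) (x y : T) : bool :=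
  [&& x != y, ~~ R x y & ~~ R y x].

Definition step (R : rel T) (p : T * T) : rel T :=
  tclos (fun x y => R x y || ((x, y) == p)).

Definition empty_rel : rel T := fun _ _ => false.

(* A history is the sequence of (winner, loser) results so far (this records
   both the offered pair and its winner). *)
Definition history := seq (T * T).

Definition R_of (h : history) : rel T := foldl step empty_rel h.

Fixpoint legal_from (R : rel T) (h : history) : bool :=
  match h with
  | [::] => true
  | p :: h' => unranked R p.1 p.2 && legal_from (step R p) h'
  end.
Definition legal (h : history) : bool := legal_from empty_rel h.

Definition strategy := history -> T * T.

Definition valid_strategy (s : strategy) : Prop :=
  forall h, legal h -> ~~ totalb (R_of h) -> unranked (R_of h) (s h).1 (s h).2.

Fixpoint play (W : rel T) (s : strategy) (fuel : nat) (h : history) : rel T :=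
  match fuel with
  | 0 => R_of h
  | fuel'.+1 =>
      if totalb (R_of h) then R_of h
      else let x := (s h).1 in let y := (s h).2 in
           play W s fuel' (rcons h (if W x y then (x, y) else (y, x)))
  end.

(* each period adds a new pair to R, so #|T|*#|T| periods suffice *)
Definition outcome (W : rel T) (s : strategy) : rel T :=
  play W s (#|T| * #|T|) [::].

Definition feasible (W R : rel T) : Prop :=
  ranking R /\ exists s : strategy, valid_strategy s /\ outcome W s =2 R.

Definition more_aligned (pref R R' : rel T) : Prop :=
  forall x y, pref x y -> R' x y -> R x y.

Definition unimprovable (W pref R : rel T) : Prop :=
  ~ exists R', [/\ feasible W R', ~ (R' =2 R) & more_aligned pref R' R].

Definition benefits (W pref : rel T) : Prop :=
  exists R, feasible W R /\ ~ unimprovable W pref R.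

End Agenda.

(* Main.v *)
Require Import Defs.
From mathcomp Require Import all_boot zify.
Set Implicit Arguments. Unset Strict Implicit. Unset Printing Implicit Defensive.

Section P.
Variable T : finType.
Implicit Types (Q R : rel T) (h : history T).

Lemma connect_sub (e R : rel T) : (forall a b, e a b -> R a b) -> transitiveR R ->
  forall a b, connect e a b -> a = b \/ R a b.
Proof.
move=> eR tR a b /connectP [p]; elim: p a => [|c p IH] a /=.
  by move=> _ ->; left.
move=> /andP [eac pc] Eb.
case: (IH c pc Eb) => [<-|Rcb]; right; first exact: eR.
exact: tR (eR _ _ eac) Rcb.
Qed.

Lemma step_sub Q R p : (forall a b, Q a b -> R a b) -> R p.1 p.2 -> transitiveR R ->
  forall a b, step Q p a b -> R a b.
Proof.
move=> QR Rp tR a b; rewrite /step /tclos => /existsP [z /andP [e1 c1]].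
have sub : forall u v, (Q u v || ((u, v) == p)) -> R u v.
  by move=> u v /orP [/QR //|/eqP E]; rewrite -E in Rp.
case: (connect_sub sub tR c1) => [<-|]; first exact: sub.
by apply: tR; apply: sub.
Qed.

Lemma step_mono Q p a b : Q a b -> step Q p a b.
Proof. by rewrite /step /tclos => Qab; apply/existsP; exists b; rewrite Qab connect0. Qed.

Lemma step_new Q p : step Q p p.1 p.2.
Proof. by rewrite /step /tclos; apply/existsP; exists p.2; case: p => x y; rewrite /= eqxx orbT connect0. Qed.

Lemma step_trans Q p : transitiveR (step Q p).
Proof.
move=> a b c; rewrite /step /tclos => /existsP [z1 /andP [e1 c1]] /existsP [z2 /andP [e2 c2]].
apply/existsP; exists z1; rewrite e1 /=.
apply: (connect_trans c1); apply: (connect_trans _ c2); apply: connect1; exact: e2.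
Qed.

Lemma R_of_rcons h p : R_of (rcons h p) = step (R_of h) p.
Proof. by rewrite /R_of foldl_rcons. Qed.

Lemma R_of_trans h : transitiveR (R_of h).
Proof.
case/lastP: h => [|h p]; first by [].
rewrite R_of_rcons; exact: step_trans.
Qed.

Lemma legal_rcons R h p : legal_from R (rcons h p) = legal_from R h && unranked (foldl (@step T) R h) p.1 p.2.
Proof. by elim: h R => [|q h IH] R /=; [rewrite andbT | rewrite IH andbA]. Qed.

Definition before (s : seq T) : rel T := fun x y => index x s < index y s.

Lemma before_ranking s : uniq s -> (forall x, x \in s) -> ranking (before s).
Proof.
move=> Us Ms; split; [split|].
- by move=> x; rewrite /before ltnn.
- move=> x y z; rewrite /before; exact: ltn_trans.
- apply/forallP => x; apply/forallP => y; apply/implyP => nxy; rewrite /before.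
  have : index x s != index y s.
    apply: contra nxy => /eqP E.
    by rewrite -(nth_index x (Ms x)) E nth_index.
  by case: ltngtP.
Qed.

Lemma total_sub Q R : ranking R -> totalb Q -> (forall a b, Q a b -> R a b) -> Q =2 R.
Proof.
move=> [[iR tR] _] /forallP tQ sub a b; apply/idP/idP => [/sub //|Rab].
have nab : a != b by apply: contraTneq Rab => ->; exact: iR.
have := implyP (forallP (tQ a) b) nab => /orP [//|/sub Rba].
by have := iR a; rewrite (tR _ _ _ Rab Rba).
Qed.

Variable W : rel T.

Definition adj (s : seq T) (q : T * T) := index q.2 s == (index q.1 s).+1.

Definition strat (s : seq T) (x0 : T) : strategy T := fun h =>
  if [pick q : T * T | unranked (R_of h) q.1 q.2 && adj s q] is Some q then q
  else if [pick q : T * T | unranked (R_of h) q.1 q.2] is Some q then q else (x0, x0).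

Lemma strat_valid s x0 : valid_strategy (strat s x0).
Proof.
move=> h _ ntot; rewrite /strat.
case: pickP => [q /andP [//]|_].
case: pickP => [q //|none].
move: ntot => /forallPn [x /forallPn [y]].
rewrite negb_imply negb_or => /andP [nxy /andP [n1 n2]].
by have := none (x, y); rewrite /unranked /= nxy n1 n2.
Qed.

Lemma adj_exists s Q (x0 : T) : uniq s -> (forall x, x \in s) -> transitiveR Q ->
  (forall a b, Q a b -> before s a b) -> ~~ totalb Q ->
  exists q, unranked Q q.1 q.2 && adj s q.
Proof.
move=> Us Ms tQ sub ntot.
case: (pickP (fun q => unranked Q q.1 q.2 && adj s q)) => [q H|none]; first by exists q.
exfalso; move/negP: ntot; apply.
have base : forall i, i.+1 < size s -> Q (nth x0 s i) (nth x0 s i.+1).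
  move=> i Hi.
  have Hi' : i < size s by lia.
  have := none (nth x0 s i, nth x0 s i.+1).
  rewrite /adj /= !index_uniq // eqxx andbT /unranked nth_uniq // .
  have -> : (i == i.+1) = false by lia.
  move=> HH; apply/negPn/negP => nQ.
  have nQ' : ~~ Q (nth x0 s i.+1) (nth x0 s i).
    by apply/negP => /sub; rewrite /before !index_uniq //; lia.
  by move: HH; rewrite nQ nQ'.
have claim : forall i d, i + d.+1 < size s -> Q (nth x0 s i) (nth x0 s (i + d.+1)).
  move=> i; elim => [|d IHd] Hd; first by rewrite addn1; apply: base; lia.
  apply: (tQ _ _ _ (IHd _)); first lia.
  have -> : i + d.+2 = (i + d.+1).+1 by lia.
  apply: base; lia.
apply/forallP => x; apply/forallP => y; apply/implyP => nxy.
have : index x s != index y s.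
  apply: contra nxy => /eqP E.
  by rewrite -(nth_index x (Ms x)) E nth_index.
have hx : index x s < size s by rewrite index_mem.
have hy : index y s < size s by rewrite index_mem.
case: ltngtP => // Hlt _.
- have := claim (index x s) (index y s - index x s).-1.
  have -> : index x s + (index y s - index x s).-1.+1 = index y s by lia.
  by move/(_ hy); rewrite !nth_index // => ->.
- have := claim (index y s) (index x s - index y s).-1.
  have -> : index y s + (index x s - index y s).-1.+1 = index x s by lia.
  by move/(_ hx); rewrite !nth_index // => ->; rewrite orbT.
Qed.


Lemma count_lt h p : ~~ R_of h p.1 p.2 ->
  #|[pred q : T * T | R_of h q.1 q.2]| < #|[pred q : T * T | R_of (rcons h p) q.1 q.2]|.
Proof.
move=> np; apply: proper_card; apply/properP; split.
  by apply/subsetP => q; rewrite !inE R_of_rcons; exact: step_mono.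
by exists p; rewrite !inE ?R_of_rcons //; exact: step_new.
Qed.

Lemma play_feas s (x0 : T) : uniq s -> (forall x, x \in s) -> sorted W s ->
  forall n h, (forall a b, R_of h a b -> before s a b) ->
  #|T| * #|T| <= #|[pred q : T * T | R_of h q.1 q.2]| + n ->
  play W (strat s x0) n h =2 before s.
Proof.
move=> Us Ms Ss; have rk := before_ranking Us Ms.
elim => [|n IH] h sub cnt /=.
  have all : forall q : T * T, R_of h q.1 q.2.
    move=> q; apply/negPn/negP => nq.
    have lt : #|[pred q : T * T | R_of h q.1 q.2]| < #|{: T * T}|.
      apply: proper_card; apply/properP; split; first by apply/subsetP.
      by exists q; rewrite ?inE.
    rewrite card_prod in lt; lia.
  by move=> a b; apply/idP/idP => [/sub //|_]; exact: (all (a, b)).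
case: ifP => tot; first exact: total_sub.
rewrite /strat; case: pickP => [[x y] /andP [un ad] | none]; last first.
  have [q Hq] := adj_exists x0 Us Ms (@R_of_trans h) sub (negbT tot).
  by move: (none q); rewrite Hq.
have bxy : before s x y by move: ad; rewrite /adj /before /= => /eqP ->.
have Wxy : W x y.
  move: ad; rewrite /adj /= => /eqP E.
  have hy : index y s < size s by rewrite index_mem.
  have := Ss; move/(sortedP x0) => /(_ (index x s)); rewrite -E => /(_ hy).
  by rewrite !nth_index // index_mem -E.
rewrite /= Wxy; apply: IH.
  rewrite R_of_rcons; apply: step_sub => //; rewrite /before => ? ? ?; exact: ltn_trans.
have := count_lt (p := (x, y)) (h := h); move: un; rewrite /unranked /= => /and3P [_ n1 _].
move=> /(_ n1) lt; apply: (leq_trans cnt); by rewrite addnS -addSn leq_add2r.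
Qed.

Lemma feasible_before s (x0 : T) : uniq s -> (forall x, x \in s) -> sorted W s -> feasible W (before s).
Proof.
move=> Us Ms Ss; split; first exact: before_ranking.
exists (strat s x0); split; first exact: strat_valid.
apply: play_feas => //; lia.
Qed.

Hypothesis hW : tournament W.

Lemma tW a b : a != b -> ~~ W a b -> W b a.
Proof.
case: hW => /forallP tot _ nab nW.
by have := implyP (forallP (tot a) b) nab; rewrite (negbTE nW).
Qed.

Lemma aW a b : W a b -> ~~ W b a.
Proof. by case: hW => _; apply. Qed.

Lemma iW a : ~~ W a a.
Proof. by apply/negP => H; have := aW H; rewrite H. Qed.

Lemma play_subW s : valid_strategy s -> transitiveR W -> forall n h, legal h ->
  (forall a b, R_of h a b -> W a b) -> forall a b, play W s n h a b -> W a b.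
Proof.
move=> vs trW; elim => [|n IH] h Lh sub /=; first exact: sub.
case: ifP => tot; first exact: sub.
have := vs h Lh (negbT tot).
set x := (s h).1; set y := (s h).2 => un.
set p := if W x y then (x, y) else (y, x).
have [nxy n1 n2] : [/\ x != y, ~~ R_of h x y & ~~ R_of h y x] by apply/and3P.
have Wp : W p.1 p.2 by rewrite /p; case: ifP => //= /negbT; apply: tW.
have unp : unranked (R_of h) p.1 p.2.
  by rewrite /p /unranked; case: ifP => _ /=; rewrite ?nxy ?n1 ?n2 // eq_sym nxy.
apply: IH.
  by rewrite /legal legal_rcons; apply/andP; split.
by rewrite R_of_rcons; apply: step_sub.
Qed.

Lemma feas_eq R : transitiveR W -> feasible W R -> R =2 W.
Proof.
move=> trW [[[iR tR] toR] [s [vs out]]].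
have sub : forall a b, R a b -> W a b.
  move=> a b; rewrite -out; apply: (play_subW vs trW) => //.
move=> a b; apply/idP/idP => [/sub //|Wab].
have nab : a != b by apply: contraTneq Wab => ->; exact: iW.
move: toR => /forallP /(_ a) /forallP /(_ b) /implyP /(_ nab) /orP [//|/sub Wba].
by have := aW Wab; rewrite Wba.
Qed.

Definition ins (k : nat) (z : T) (r : seq T) := take k r ++ z :: drop k r.

Lemma ins_0 z r : ins 0 z r = z :: r. Proof. by case: r. Qed.
Lemma ins_S k z y r : ins k.+1 z (y :: r) = y :: ins k z r. Proof. by []. Qed.
Lemma ins_nil k z : ins k z [::] = [:: z]. Proof. by case: k. Qed.

Lemma perm_ins k z r : perm_eq (ins k z r) (z :: r).
Proof. by rewrite /ins -cat1s perm_catCA cat_take_drop. Qed.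

Lemma index_ins k z r a : a \in r -> a != z ->
  index a (ins k z r) = if index a r < k then index a r else (index a r).+1.
Proof.
elim: r k => [|y r IH] k //= Ha Haz.
case: k => [|k].
  by rewrite ins_0 /= eq_sym (negbTE Haz).
rewrite ins_S /=; case: eqP => [//|/eqP nya].
rewrite IH //; last by move: Ha; rewrite in_cons eq_sym (negbTE nya).
by rewrite ltnS; case: ifP.
Qed.

Lemma index_ins_z k z r : z \notin r -> index z (ins k z r) = minn k (size r).
Proof.
move=> Hz; rewrite /ins index_cat.
have -> : (z \in take k r) = false by apply/negbTE; apply: contra Hz; exact: mem_take.
rewrite /= eqxx addn0 size_take; case: ltnP => H; lia.
Qed.

Lemma before_ins k z r a b : a \in r -> b \in r -> z \notin r ->
  before (ins k z r) a b = before r a b.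
Proof.
move=> Ha Hb Hz.
have az : a != z by apply: contraNneq Hz => <-.
have bz : b != z by apply: contraNneq Hz => <-.
rewrite /before !index_ins //.
case: (ltnP (index a r) k) => H1; case: (ltnP (index b r) k) => H2; apply/idP/idP; lia.
Qed.

Lemma before_ins_az k z r a : a \in r -> z \notin r ->
  before (ins k z r) a z = (index a r < k).
Proof.
move=> Ha Hz.
have az : a != z by apply: contraNneq Hz => <-.
have := index_mem a r; rewrite Ha => Hs.
rewrite /before index_ins_z // index_ins //.
case: (ltnP (index a r) k) => H1; apply/idP/idP; lia.
Qed.

Lemma before_ins_za k z r a : a \in r -> z \notin r ->
  before (ins k z r) z a = (k <= index a r).
Proof.
move=> Ha Hz.
have az : a != z by apply: contraNneq Hz => <-.
have := index_mem a r; rewrite Ha => Hs.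
rewrite /before index_ins_z // index_ins //.
case: (ltnP (index a r) k) => H1; apply/idP/idP; lia.
Qed.

Fixpoint kL (z : T) (r : seq T) : nat :=
  match r with
  | [::] => 0
  | y :: r' => if has (fun w => W w z) r then (kL z r').+1 else 0
  end.

Lemma kL_prop z r a : a \in r -> W a z -> index a r < kL z r.
Proof.
elim: r => [|y r IH] //= Ha Waz.
have -> : W y z || has (fun w => W w z) r.
  move: Ha; rewrite in_cons => /orP [/eqP <-|Har]; first by rewrite Waz.
  by apply/orP; right; apply/hasP; exists a.
case: eqP => // /eqP nya; rewrite ltnS; apply: IH => //.
by move: Ha; rewrite in_cons eq_sym (negbTE nya).
Qed.

Lemma kL_contra z r a : a \in r -> kL z r <= index a r -> ~~ W a z.
Proof. by move=> Ha H; apply/negP => /(kL_prop Ha); lia. Qed.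

Lemma find_prop z r a : a \in r -> W z a -> find (W z) r <= index a r.
Proof.
move=> Ha Wza; rewrite leqNgt; apply/negP => lt.
by have := before_find a lt; rewrite nth_index // Wza.
Qed.

Lemma pathH z : forall r x, z \notin r -> path W x r -> W x z -> path W x (ins (find (W z) r) z r).
Proof.
elim => [|y r IH] x Hz; first by rewrite ins_nil /= => _ ->.
move=> /andP [Wxy Pr] Wxz.
have -> : find (W z) (y :: r) = if W z y then 0 else (find (W z) r).+1 by [].
have yz : y != z by apply: contraNneq Hz => ->; rewrite mem_head.
have Hz' : z \notin r by apply: contra Hz => H; rewrite in_cons H orbT.
case: ifP => Wzy; first by rewrite ins_0 /= Wxz Wzy; exact: Pr.
rewrite ins_S /= Wxy /=; apply: IH => //; apply: (tW (a:=z)); [by rewrite eq_sym | by rewrite Wzy].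
Qed.

Lemma sortedH z r : z \notin r -> sorted W r -> sorted W (ins (find (W z) r) z r).
Proof.
case: r => [|y r] Hz; first by rewrite ins_nil.
move=> Pr.
have yz : y != z by apply: contraNneq Hz => ->; rewrite mem_head.
have Hz' : z \notin r by apply: contra Hz => H; rewrite in_cons H orbT.
have -> : find (W z) (y :: r) = if W z y then 0 else (find (W z) r).+1 by [].
case: ifP => Wzy; first by rewrite ins_0 /= Wzy; exact: Pr.
rewrite ins_S /=; apply: pathH => //; apply: (tW (a:=z)); [by rewrite eq_sym | by rewrite Wzy].
Qed.

Lemma pathL z : forall r x, z \notin r -> path W x r -> (has (fun w => W w z) r || W x z) ->
  path W x (ins (kL z r) z r).
Proof.
elim => [|y r IH] x Hz; first by rewrite ins_nil /= => _ ->.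
move=> /andP [Wxy Pr] Hh.
have -> : kL z (y :: r) = if has (fun w => W w z) (y :: r) then (kL z r).+1 else 0 by [].
have yz : y != z by apply: contraNneq Hz => ->; rewrite mem_head.
have Hz' : z \notin r by apply: contra Hz => H; rewrite in_cons H orbT.
case: ifP => Hh'.
  rewrite ins_S /= Wxy /=; apply: IH => //; by rewrite orbC.
move: Hh; rewrite Hh' /= => Wxz.
rewrite Wxz /=; apply/andP; split; last exact: Pr.
by apply: (tW (a:=y)) => //; move: Hh'; apply: contraFN => H; rewrite /= H.
Qed.

Lemma sortedL z r : z \notin r -> sorted W r -> sorted W (ins (kL z r) z r).
Proof.
case: r => [|y r] Hz; first by rewrite ins_nil.
move=> Pr.
have yz : y != z by apply: contraNneq Hz => ->; rewrite mem_head.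
have Hz' : z \notin r by apply: contra Hz => H; rewrite in_cons H orbT.
have -> : kL z (y :: r) = if has (fun w => W w z) (y :: r) then (kL z r).+1 else 0 by [].
case: ifP => Hh'.
  by rewrite ins_S /=; apply: pathL => //; rewrite orbC.
rewrite ins_0 /=; apply/andP; split; last exact: Pr.
by apply: (tW (a:=y)) => //; move: Hh'; apply: contraFN => H; rewrite /= H.
Qed.

Definition bL (l : seq T) := foldr (fun z r => ins (kL z r) z r) [::] l.
Definition bH (l : seq T) := foldr (fun z r => ins (find (W z) r) z r) [::] l.

Lemma build (pref : rel T) : irreflexiveR pref -> transitiveR pref ->
 forall l, uniq l -> sorted (fun x y => (x == y) || pref x y) l ->
 [/\ perm_eq (bL l) l /\ perm_eq (bH l) l, sorted W (bL l) /\ sorted W (bH l),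
   (forall x y, x \in l -> y \in l -> pref x y -> before (bL l) x y -> before (bH l) x y) &
   ((forall x y, x \in l -> y \in l -> before (bL l) x y = before (bH l) x y) ->
     forall x y, x \in l -> y \in l -> W x y = before (bL l) x y)].
Proof.
move=> irr trp.
have leT : transitive (fun x y => (x == y) || pref x y).
  move=> y x z; case/orP => [/eqP ->|pxy] //; case/orP => [/eqP <-|pyz]; rewrite ?pxy ?orbT //.
  by rewrite (trp _ _ _ pxy pyz) orbT.
elim => [|z l IH]; first by move=> _ _; split.
move=> /andP [zl Ul] Sl.
have Az := order_path_min leT Sl.
have pz : forall y, y \in l -> pref z y.
  move=> y Hy; have := allP Az y Hy => /orP [/eqP E|//].
  by move: zl; rewrite E Hy.
have [[P1 P2] [S1 S2] A1 E1] := IH Ul (path_sorted Sl).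
have -> : bL (z :: l) = ins (kL z (bL l)) z (bL l) by [].
have -> : bH (z :: l) = ins (find (W z) (bH l)) z (bH l) by [].
set r1 := bL l in P1 S1 A1 E1 *; set r2 := bH l in P2 S2 A1 E1 *.
have m1 := perm_mem P1; have m2 := perm_mem P2.
have z1 : z \notin r1 by rewrite m1.
have z2 : z \notin r2 by rewrite m2.
have zneq : forall y, y \in l -> y != z by move=> y Hy; apply: contraNneq zl => <-.
split.
- by split; apply: (perm_trans (perm_ins _ _ _)); rewrite perm_cons.
- by split; [exact: sortedL | exact: sortedH].
- move=> x y; rewrite !in_cons => Hx Hy pxy.
  case: (eqVneq x z) Hx => [Ex _|xz /= Hx]; case: (eqVneq y z) Hy => [Ey _|yz /= Hy].
  + by move: pxy; rewrite Ex Ey (negbTE (irr z)).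
  + rewrite Ex in pxy *; rewrite before_ins_za ?m1 // before_ins_za ?m2 // => H.
    apply: find_prop; first by rewrite m2.
    apply: (tW (a:=y)) => //; apply: kL_contra H; by rewrite m1.
  + rewrite Ey in pxy; by have := irr x; rewrite (trp _ _ _ pxy (pz x Hx)).
  + rewrite !before_ins ?m1 ?m2 //; exact: A1.
- move=> Heq.
  have Heq' : forall x y, x \in l -> y \in l -> before r1 x y = before r2 x y.
    move=> x y Hx Hy; have := Heq x y; rewrite !in_cons Hx Hy !orbT => /(_ isT isT).
    by rewrite !before_ins ?m1 ?m2.
  have E := E1 Heq'.
  have key : forall y, y \in l -> W z y = before (ins (kL z r1) z r1) z y.
    move=> y Hy; rewrite before_ins_za ?m1 //; apply/idP/idP => [Wzy|H].
      have := Heq z y; rewrite !in_cons eqxx Hy orbT => /(_ isT isT).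
      rewrite before_ins_za ?m1 // before_ins_za ?m2 // => ->; apply: find_prop => //.
      by rewrite m2.
    apply: (tW (a:=y)); first exact: zneq.
    by apply: kL_contra H; rewrite m1.
  move=> x y; rewrite !in_cons => Hx Hy.
  case: (eqVneq x z) Hx => [-> _|xz /= Hx]; case: (eqVneq y z) Hy => [-> _|yz /= Hy].
  + by rewrite /before ltnn; apply/negbTE; exact: iW.
  + exact: key.
  + have Hx1 : x \in r1 by rewrite m1.
    rewrite (before_ins_az _ Hx1 z1) ltnNge -(before_ins_za _ Hx1 z1) -key //.
    case: (boolP (W z x)) => H; first by rewrite (negbTE (aW H)).
    by rewrite (tW (a:=z)) // eq_sym.
  + by rewrite before_ins ?m1 //; exact: E.
Qed.

Lemma benefit_nonrank : ~ ranking W -> forall pref, ranking pref -> benefits W pref.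
Proof.
move=> nW pref [[irr trp] totp].
have leTot : total (fun x y => (x == y) || pref x y).
  move=> x y; case: (eqVneq x y) => [->|nxy] /=; first by rewrite ?eqxx.
  idtac.
  by move: totp => /forallP /(_ x) /forallP /(_ y) /implyP /(_ nxy).
set u := sort (fun x y => (x == y) || pref x y) (enum T).
have Uu : uniq u by rewrite sort_uniq enum_uniq.
have Mu : forall x, x \in u by move=> x; rewrite mem_sort mem_enum.
have Su := sort_sorted leTot (enum T).
have [[P1 P2] [S1 S2] A1 E1] := build irr trp Uu Su.
have U1 : uniq (bL u) by rewrite (perm_uniq P1).
have U2 : uniq (bH u) by rewrite (perm_uniq P2).
have M1 : forall x, x \in bL u by move=> x; rewrite (perm_mem P1).
have M2 : forall x, x \in bH u by move=> x; rewrite (perm_mem P2).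
case: (boolP [forall x, forall y, before (bL u) x y == before (bH u) x y]) =>
  [/forallP Hall|/forallPn [x /forallPn [y Hne]]].
  exfalso; apply: nW.
  have E : forall x y, W x y = before (bL u) x y.
    move=> x y; apply: E1 => // a b _ _; exact: eqP (forallP (Hall a) b).
  have [[i1 t1] to1] := before_ranking U1 M1.
  split; [split|].
  - by move=> a; rewrite E; exact: i1.
  - by move=> a b c; rewrite !E; exact: t1.
  - by apply/forallP => a; apply/forallP => b; rewrite !E; exact: (forallP (forallP to1 a) b).
exists (before (bL u)); split; first exact: (feasible_before x).
move=> Hun; apply: Hun; exists (before (bH u)); split.
- exact: (feasible_before x).
- by move=> Eq; move: Hne; rewrite Eq eqxx.
- by move=> a b pab; apply: A1.
Qed.

Lemma nobenefit_rank : ranking W -> forall pref, ~ benefits W pref.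
Proof.
move=> [[_ trW] _] pref [R [fR nun]]; apply: nun => -[R' [fR' ne _]].
by apply: ne => a b; rewrite (feas_eq trW fR') (feas_eq trW fR).
Qed.

End P.

Lemma exists_ranking (T : finType) : exists pref : rel T, ranking pref.
Proof.
exists (before (enum T)); apply: before_ranking; first exact: enum_uniq.
by move=> x; rewrite mem_enum.
Qed.

Unset Implicit Arguments.

Theorem proposition6 (T : finType) (W : rel T) (hW : tournament W) :
  [/\ ~ ranking W <-> (exists pref : rel T, ranking pref /\ benefits W pref),
      (exists pref : rel T, ranking pref /\ benefits W pref) <->
        (forall pref : rel T, ranking pref -> benefits W pref)
    & ~ ranking W <-> (forall pref : rel T, ranking pref -> benefits W pref)].
Proof.
have A := benefit_nonrank hW.
have B := nobenefit_rank hW.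
have [p0 Hp0] := exists_ranking T.
split; split.
- by move=> nW; exists p0; split => //; exact: A.
- by move=> [pref [Hp Hb]] rW; exact: B rW pref Hb.
- move=> [pref [Hp Hb]] pref' Hp'; apply: A => // rW; exact: B rW pref Hb.
- by move=> H; exists p0; split => //; exact: H.
- by move=> nW pref Hp; exact: A.
- by move=> H rW; exact: B rW p0 (H p0 Hp0).
Qed.
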